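(* Let $n$ be a non-negative integer. Then \[ \sum_{k=0}^{n}(-1)^k\binom{n}{k}2^{-2k}\binom{2k}{k}H_k^{(2)}=\binom{2n}{n}2^{-2n}H_n^{(2)}-\sum_{k=0}^{n-1}\frac{H_n-H_k}{n-k}\binom{2k}{k}2^{-2k}, \] and, more generally, for all complex numbers $u,v$ with $\Re u>-1$ and $\Re v>-1$, \[ \begin{aligned} &\sum_{k=0}^{n}(-1)^k\binom{n}{k}2^{-2k}\binom{2k+v}{(2k+v)/2}\binom{(2k+u+v)/2}{u/2}^{-1}H_k^{(2)}\\ &\quad=\binom{v}{v/2}\binom{u}{u/2}^{-1}\binom{2n+u}{(2n+u)/2}\binom{(2n+u+v)/2}{v/2}^{-1}2^{-2n}H_n^{(2)}\\ &\qquad-\binom{v}{v/2}\binom{u}{u/2}^{-1}\sum_{k=0}^{n-1}\frac{H_n-H_k}{n-k}\binom{2k+u}{(2k+u)/2}2^{-2k}\binom{(2k+u+v)/2}{v/2}^{-1}. \end{aligned} \]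
   Context: For integers $m\ge0$, $H_m=\sum_{j=1}^m 1/j$ and $H_m^{(2)}=\sum_{j=1}^m 1/j^2$. Binomial coefficients with complex entries: $\binom{x}{y}=\frac{\Gamma(x+1)}{\Gamma(y+1)\Gamma(x-y+1)}$. *)

(* Defs.v *)
From Stdlib Require Import Reals List Factorial.
From Coquelicot Require Import Coquelicot.

Definition rsum (f : nat -> R) (m : nat) : R :=
  fold_right (fun k acc => (f k + acc)%R) 0%R (seq 0 m).
Definition csum (f : nat -> C) (m : nat) : C :=
  fold_right (fun k acc => (f k + acc)%C) (RtoC 0) (seq 0 m).
Definition cprod (f : nat -> C) (m : nat) : C :=
  fold_right (fun k acc => (f k * acc)%C) (RtoC 1) (seq 0 m).

Definition H (m : nat) : R := rsum (fun j => / INR (S j)) m.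
Definition H2 (m : nat) : R := rsum (fun j => / (INR (S j) ^ 2)) m.

(* a^z = exp(z ln a) for a real a > 0 and complex z *)
Definition cpow (a : R) (z : C) : C :=
  (RtoC (exp (Re z * ln a)) * (cos (Im z * ln a), sin (Im z * ln a)))%C.

(* Euler's Gamma function via Gauss' limit formula
   Gamma z = lim_{n->oo} n! n^z / (z (z+1) ... (z+n)),
   valid for z not a non-positive integer (the limit is taken separately
   on real and imaginary parts). *)
Definition gauss_seq (z : C) (n : nat) : C :=
  (RtoC (INR (fact n)) * cpow (INR n) z
   / cprod (fun j => z + RtoC (INR j)) (S n))%C.
Definition CGamma (z : C) : C :=
  (real (Lim_seq (fun n => Re (gauss_seq z n))),
   real (Lim_seq (fun n => Im (gauss_seq z n)))).

Definition cbinom (x y : C) : C :=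
  (CGamma (x + 1) / (CGamma (y + 1) * CGamma (x - y + 1)))%C.

(* Main.v *)
Require Import Defs.
From Stdlib Require Import Reals List.
From Coquelicot Require Import Coquelicot.
From Stdlib Require Import Lia Lra Factorial.

Module Aux.
Open Scope R_scope.

Fixpoint rs (f : nat -> R) (m : nat) : R :=
  match m with O => 0 | S m => rs f m + f m end.
Fixpoint cs (f : nat -> C) (m : nat) : C :=
  match m with O => RtoC 0 | S m => (cs f m + f m)%C end.

Lemma fold_lin_R (f : nat -> R) l a :
  fold_right (fun k acc => f k + acc) a l = fold_right (fun k acc => f k + acc) 0 l + a.
Proof. induction l as [|x l IH]; simpl. ring. rewrite IH; ring. Qed.

Lemma rsum_rs f m : rsum f m = rs f m.
Proof.
  induction m as [|m IH]. reflexivity.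
  unfold rsum in *. rewrite seq_S, fold_right_app. simpl.
  rewrite fold_lin_R, IH. ring.
Qed.

Lemma fold_lin_C (f : nat -> C) l a :
  fold_right (fun k acc => (f k + acc)%C) a l = (fold_right (fun k acc => (f k + acc)%C) (RtoC 0) l + a)%C.
Proof. induction l as [|x l IH]; simpl. ring. rewrite IH; ring. Qed.

Lemma csum_cs f m : csum f m = cs f m.
Proof.
  induction m as [|m IH]. reflexivity.
  unfold csum in *. rewrite seq_S, fold_right_app. simpl.
  rewrite fold_lin_C, IH. ring.
Qed.

Lemma rs_ext f g m : (forall k, (k < m)%nat -> f k = g k) -> rs f m = rs g m.
Proof. induction m; simpl; intros Hf; auto. rewrite IHm, Hf; auto. Qed.
Lemma cs_ext f g m : (forall k, (k < m)%nat -> f k = g k) -> cs f m = cs g m.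
Proof. induction m; simpl; intros Hf; auto. rewrite IHm, Hf; auto. Qed.

Lemma rs_shift f m : rs f (S m) = f O + rs (fun k => f (S k)) m.
Proof. induction m. simpl; ring. change (rs f (S (S m))) with (rs f (S m) + f (S m)).
  rewrite IHm. simpl. ring. Qed.
Lemma cs_shift f m : cs f (S m) = (f O + cs (fun k => f (S k)) m)%C.
Proof. induction m. simpl; ring. change (cs f (S (S m))) with (cs f (S m) + f (S m))%C.
  rewrite IHm. simpl. ring. Qed.

Lemma rs_plus f g m : rs (fun k => f k + g k) m = rs f m + rs g m.
Proof. induction m; simpl. ring. rewrite IHm; ring. Qed.
Lemma cs_plus f g m : cs (fun k => f k + g k)%C m = (cs f m + cs g m)%C.
Proof. induction m; simpl. ring. rewrite IHm; ring. Qed.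
Lemma rs_scal c f m : rs (fun k => c * f k) m = c * rs f m.
Proof. induction m; simpl. ring. rewrite IHm; ring. Qed.
Lemma cs_scal c f m : cs (fun k => c * f k)%C m = (c * cs f m)%C.
Proof. induction m; simpl. ring. rewrite IHm; ring. Qed.

Lemma rs_zero f m : (forall k, (k < m)%nat -> f k = 0) -> rs f m = 0.
Proof. induction m; simpl; intros Hf; auto. rewrite IHm, Hf; auto. ring. Qed.
Lemma cs_zero f m : (forall k, (k < m)%nat -> f k = RtoC 0) -> cs f m = RtoC 0.
Proof. induction m; simpl; intros Hf; auto. rewrite IHm, Hf; auto. ring. Qed.

Lemma rs_split f i M : rs f (i + M) = rs f i + rs (fun m => f (i + m)%nat) M.
Proof. induction M. rewrite Nat.add_0_r; simpl; ring.
  rewrite Nat.add_succ_r. simpl. rewrite IHM. ring. Qed.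
Lemma cs_split f i M : cs f (i + M) = (cs f i + cs (fun m => f (i + m)%nat) M)%C.
Proof. induction M. rewrite Nat.add_0_r; simpl; ring.
  rewrite Nat.add_succ_r. simpl. rewrite IHM. ring. Qed.

Lemma cs_tail f m m' : (m <= m')%nat -> (forall k, (m <= k)%nat -> (k < m')%nat -> f k = RtoC 0) ->
  cs f m' = cs f m.
Proof. intros Hle H. replace m' with (m + (m' - m))%nat by lia.
  rewrite cs_split, (cs_zero (fun k => f (m + k)%nat)). ring. intros; apply H; lia. Qed.
Lemma rs_tail f m m' : (m <= m')%nat -> (forall k, (m <= k)%nat -> (k < m')%nat -> f k = 0) ->
  rs f m' = rs f m.
Proof. intros Hle H. replace m' with (m + (m' - m))%nat by lia.
  rewrite rs_split, (rs_zero (fun k => f (m + k)%nat)). ring. intros; apply H; lia. Qed.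

Lemma cs_swap (F : nat -> nat -> C) m1 m2 :
  cs (fun i => cs (fun j => F i j) m2) m1 = cs (fun j => cs (fun i => F i j) m1) m2.
Proof. induction m1; simpl. symmetry; apply cs_zero; auto.
  rewrite IHm1. rewrite <- cs_plus. reflexivity. Qed.

Lemma RtoC_rs f m : RtoC (rs f m) = cs (fun k => RtoC (f k)) m.
Proof. induction m; simpl. auto. rewrite <- IHm, RtoC_plus. auto. Qed.

Lemma RtoC_inv' x : RtoC (/ x) = (/ RtoC x)%C.
Proof. destruct (Req_dec x 0). subst. rewrite Rinv_0. unfold Cinv. simpl.
  apply injective_projections; simpl; unfold Rdiv; rewrite ?Rmult_0_l; try ring.
  apply RtoC_inv; auto. Qed.

Definition binR (n k : nat) : R := if Nat.leb k n then Binomial.C n k else 0.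

Lemma binR_0 n : binR n 0 = 1.
Proof. unfold binR. simpl. unfold Binomial.C. rewrite Nat.sub_0_r. simpl.
  field. apply INR_fact_neq_0. Qed.

Lemma binR_big n k : (n < k)%nat -> binR n k = 0.
Proof. intros; unfold binR. destruct (Nat.leb_spec k n); auto; lia. Qed.

Lemma binR_C n k : (k <= n)%nat -> binR n k = Binomial.C n k.
Proof. intros; unfold binR. destruct (Nat.leb_spec k n); auto; lia. Qed.

Lemma C_nn n : Binomial.C n n = 1.
Proof. unfold Binomial.C. rewrite Nat.sub_diag. simpl. field. apply INR_fact_neq_0. Qed.

Lemma binR_pascal n k : binR (S n) (S k) = binR n k + binR n (S k).
Proof.
  destruct (Nat.lt_trichotomy k n) as [H|[H|H]].
  - rewrite !binR_C by lia. rewrite pascal; auto.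
  - subst. rewrite (binR_big n (S n)) by lia. rewrite !binR_C by lia. rewrite !C_nn. ring.
  - rewrite !binR_big by lia. ring.
Qed.

Lemma H_S m : H (S m) = H m + / INR (S m).
Proof. unfold H. rewrite !rsum_rs. reflexivity. Qed.
Lemma H2_S m : H2 (S m) = H2 m + / (INR (S m) ^ 2).
Proof. unfold H2. rewrite !rsum_rs. reflexivity. Qed.
Lemma H_0 : H 0 = 0. Proof. reflexivity. Qed.
Lemma H2_0 : H2 0 = 0. Proof. reflexivity. Qed.

Definition Gs M j := rs (fun m => (-1)^m * binR M m * H2 (j + m)) (S M).

Lemma Gs_0 j : Gs 0 j = H2 j.
Proof. unfold Gs. simpl. rewrite binR_0, Nat.add_0_r. ring. Qed.

Lemma Gs_rec M j : Gs (S M) j = Gs M j - Gs M (S j).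
Proof.
  unfold Gs. rewrite rs_shift. rewrite binR_0.
  rewrite (rs_ext _ (fun k => (-1) * ((-1)^k * binR M k * H2 (S j + k)) + (-1) * ((-1)^k * binR M (S k) * H2 (j + S k)))).
  2:{ intros k _. rewrite binR_pascal. replace (S j + k)%nat with (j + S k)%nat by lia. simpl. ring. }
  rewrite rs_plus, !rs_scal.
assert (E: rs (fun m => (-1)^m * binR M m * H2 (j + m)) (S M) = (-1)^0*1*H2(j+0) + (-1) * rs (fun k => (-1)^k * binR M (S k) * H2 (j + S k)) (S M)).
  { rewrite <- (rs_tail _ (S M) (S (S M))). rewrite rs_shift, binR_0. f_equal. rewrite <- rs_scal. apply rs_ext; intros; simpl; ring.
    lia. intros k Hk1 Hk2; replace k with (S M) by lia; rewrite binR_big by lia; ring. }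
  rewrite E. ring.
Qed.

Lemma fact_S_INR n : INR (fact (S n)) = INR (S n) * INR (fact n).
Proof. rewrite <- mult_INR. reflexivity. Qed.

Lemma INR_pos_S n : 0 < INR (S n).
Proof. apply lt_0_INR; lia. Qed.

Lemma Gs_closed M j : Gs (S M) j = - (H (j + S M) - H j) / (INR (S M) * Binomial.C (j + S M) j).
Proof.
  revert j. induction M as [|M IH]; intro j.
  - rewrite Gs_rec, !Gs_0, H2_S. rewrite Nat.add_1_r, H_S. unfold Binomial.C.
    replace (S j - j)%nat with 1%nat by lia. rewrite fact_S_INR.
    pose proof (INR_fact_neq_0 j). pose proof (INR_pos_S j). simpl (fact 1). simpl (INR 1).
    field. lra.
  - rewrite Gs_rec, !IH.
    replace (S j + S M)%nat with (S (j + S M)) by lia.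
    replace (j + S (S M))%nat with (S (j + S M)) by lia.
    rewrite !H_S. unfold Binomial.C.
    replace (j + S M - j)%nat with (S M) by lia.
    replace (S (j + S M) - S j)%nat with (S M) by lia.
    replace (S (j + S M) - j)%nat with (S (S M)) by lia.
    rewrite !(fact_S_INR (j + S M)), (fact_S_INR j), (fact_S_INR (S M)).
    pose proof (INR_fact_neq_0 j). pose proof (INR_fact_neq_0 (S M)). pose proof (INR_fact_neq_0 (j + S M)).
    rewrite !S_INR, plus_INR, S_INR.
    pose proof (pos_INR j). pose proof (pos_INR M).
    field. repeat split; lra.
Qed.

Lemma C_neq0 n k : Binomial.C n k <> 0.
Proof. unfold Binomial.C. pose proof (INR_fact_neq_0 n). pose proof (INR_fact_neq_0 k).
  pose proof (INR_fact_neq_0 (n - k)). unfold Rdiv. apply Rmult_integral_contrapositive; split; auto.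
  apply Rinv_neq_0_compat. apply Rmult_integral_contrapositive; split; auto. Qed.

Lemma binR_prod n i m : (i <= n)%nat -> binR n (i+m) * binR (i+m) i = binR n i * binR (n-i) m.
Proof.
  intros Hi. destruct (Compare_dec.le_lt_dec (i + m) n) as [Hle|Hlt].
  - rewrite !binR_C by lia. unfold Binomial.C.
    replace (i + m - i)%nat with m by lia. replace (n - i - m)%nat with (n - (i + m))%nat by lia.
    pose proof (INR_fact_neq_0 n). pose proof (INR_fact_neq_0 i). pose proof (INR_fact_neq_0 m).
    pose proof (INR_fact_neq_0 (i+m)). pose proof (INR_fact_neq_0 (n - i)). pose proof (INR_fact_neq_0 (n - (i+m))).
    field. auto.
  - rewrite (binR_big n (i+m)), (binR_big (n-i) m) by lia. ring.
Qed.

Lemma KI n i : (i <= n)%nat ->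
  rs (fun k => (-1)^k * binR n k * binR k i * H2 k) (S n)
  = (-1)^i * (if Nat.eqb i n then H2 n else - (H n - H i) / (INR n - INR i)).
Proof.
  intros Hi. replace (S n) with (i + S (n - i))%nat by lia.
  rewrite rs_split, rs_zero.
  2:{ intros k Hk. rewrite (binR_big k i) by lia. ring. }
  rewrite (rs_ext _ (fun m => ((-1)^i * binR n i) * ((-1)^m * binR (n - i) m * H2 (i + m)))).
  2:{ intros m _. rewrite pow_add. transitivity ((-1)^i * (-1)^m * (binR n (i+m) * binR (i+m) i) * H2 (i+m)). ring. rewrite binR_prod by auto. ring. }
  rewrite rs_scal. fold (Gs (n - i) i).
  destruct (Nat.eqb_spec i n) as [E|E].
  - subst. rewrite Nat.sub_diag, Gs_0. rewrite binR_C by lia. rewrite C_nn. ring.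
  - destruct (n - i)%nat as [|M] eqn:HM; [lia|].
    rewrite Gs_closed. replace (i + S M)%nat with n by lia. rewrite binR_C by lia.
    replace (INR (S M)) with (INR n - INR i) by (rewrite <- HM, minus_INR by lia; auto).
    pose proof (C_neq0 n i). assert (INR n - INR i <> 0).
    { rewrite <- minus_INR by lia. rewrite HM. apply not_0_INR. lia. }
    field. auto.
Qed.

Definition wnk n k := (H n - H k) / (INR n - INR k).
Definition tr (b : nat -> C) k := cs (fun i => RtoC ((-1)^i * binR k i) * b i)%C (S k).

Lemma cs_mult_lr X Y g m : (X * cs g m * Y)%C = cs (fun i => X * g i * Y)%C m.
Proof. induction m; simpl. ring. rewrite <- IHm. ring. Qed.

Lemma cs_RtoC_r f c m : cs (fun k => RtoC (f k) * c)%C m = (RtoC (rs f m) * c)%C.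
Proof. induction m; simpl. ring. rewrite IHm, RtoC_plus. ring. Qed.

Lemma sq_m1 i : (-1)^i * (-1)^i = 1.
Proof. rewrite <- Rpow_mult_distr. replace (-1 * -1) with 1 by ring. apply pow1. Qed.

Lemma RtoC_m1 : RtoC (-1) = (- 1)%C.
Proof. apply injective_projections; simpl; ring. Qed.

Lemma CORE n b :
  cs (fun k => RtoC ((-1)^k * binR n k) * tr b k * RtoC (H2 k))%C (S n)
  = (b n * RtoC (H2 n) - cs (fun k => RtoC (wnk n k) * b k) n)%C.
Proof.
  rewrite (cs_ext _ (fun k => cs (fun i => RtoC ((-1)^k * binR n k * ((-1)^i * binR k i) * H2 k) * b i) (S n))%C).
  2:{ intros k Hk. unfold tr. rewrite (cs_tail _ (S k) (S n)).
      3:{ intros k0 H1 H2'. rewrite (binR_big k k0) by lia. rewrite !Rmult_0_r, !Rmult_0_l. apply Cmult_0_l. }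
      2: lia.
      rewrite cs_mult_lr. apply cs_ext. intros i _. rewrite !RtoC_mult. ring. }
  rewrite cs_swap.
  rewrite (cs_ext _ (fun i => RtoC ((-1)^i * ((-1)^i * (if Nat.eqb i n then H2 n else - (H n - H i) / (INR n - INR i)))) * b i)%C).
  2:{ intros i Hi. rewrite cs_RtoC_r. f_equal. f_equal.
      rewrite <- KI by lia. rewrite <- rs_scal. apply rs_ext. intros; ring. }
  simpl (cs _ (S n)). rewrite Nat.eqb_refl.
  rewrite (cs_ext _ (fun i => (-1) * (RtoC (wnk n i) * b i))%C).
  2:{ intros i Hi. destruct (Nat.eqb_spec i n); [lia|]. rewrite <- Rmult_assoc, sq_m1.
      unfold wnk. replace (1 * (- (H n - H i) / (INR n - INR i)))%R with (-1 * ((H n - H i) / (INR n - INR i)))%R by (unfold Rdiv; ring).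
      rewrite RtoC_mult. ring. }
  rewrite cs_scal. rewrite <- Rmult_assoc, sq_m1, Rmult_1_l. ring.
Qed.

Fixpoint P (z : C) (k : nat) : C :=
  match k with O => RtoC 1 | S k => (P z k * (z + RtoC (INR k)))%C end.

Lemma P_shift z i : P z (S i) = (z * P (z + RtoC 1) i)%C.
Proof.
  induction i. simpl. ring.
  change (P z (S (S i))) with (P z (S i) * (z + RtoC (INR (S i))))%C.
  rewrite IHi. change (P (z + RtoC 1) (S i)) with (P (z + RtoC 1) i * (z + RtoC 1 + RtoC (INR i)))%C.
  rewrite S_INR, RtoC_plus. ring.
Qed.

Lemma Cmult_nz (a b : C) : a <> RtoC 0 -> b <> RtoC 0 -> (a * b)%C <> RtoC 0.
Proof. apply Cmult_neq_0. Qed.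

Lemma P_nz z k : (forall j, (z + RtoC (INR j))%C <> RtoC 0) -> P z k <> RtoC 0.
Proof. intros Hz. induction k; simpl. apply C1_nz. apply Cmult_nz; auto. Qed.

Lemma P_up z k : z <> RtoC 0 -> P (z + RtoC 1) k = (P z k * (z + RtoC (INR k)) / z)%C.
Proof. intros Hz. change (P z k * (z + RtoC (INR k)))%C with (P z (S k)). rewrite P_shift. field. auto. Qed.

Lemma CV k : forall g b, (forall j, (b + RtoC (INR j))%C <> RtoC 0) ->
  cs (fun i => RtoC ((-1)^i * binR k i) * (P g i / P b i))%C (S k) = (P (b - g) k / P b k)%C.
Proof.
  induction k as [|k IH]; intros g b Hb.
  - simpl. rewrite binR_0. rewrite Rmult_1_l. field; try apply C1_nz.
  - assert (Hb0 : b <> RtoC 0). { intro E. apply (Hb O). rewrite E. simpl. ring. }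
    assert (Hb1 : forall j, (b + RtoC 1 + RtoC (INR j))%C <> RtoC 0).
    { intros j. replace (b + RtoC 1 + RtoC (INR j))%C with (b + RtoC (INR (S j)))%C. apply Hb.
      rewrite S_INR, RtoC_plus. ring. }
    pose proof (P_nz _ k Hb) as HPk.
    rewrite cs_shift.
    set (B := fun i => (RtoC ((-1)^i * binR k (S i)) * (g * P (g + RtoC 1) i / (b * P (b + RtoC 1) i)))%C).
    rewrite (cs_ext _ (fun i => (- g / b) * (RtoC ((-1)^i * binR k i) * (P (g + RtoC 1) i / P (b + RtoC 1) i)) + (-1) * B i)%C).
    2:{ intros i _. unfold B. rewrite binR_pascal, !P_shift. simpl pow.
        rewrite Rmult_plus_distr_l, RtoC_plus, !RtoC_mult. field. split; auto. apply P_nz; auto. }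
    rewrite cs_plus, !cs_scal, IH by auto.
    assert (E : (- 1 * cs B (S k))%C = (P (b - g) k / P b k - 1)%C).
    { rewrite <- IH by auto. rewrite <- (cs_tail (fun i => RtoC ((-1)^i * binR k i) * (P g i / P b i))%C (S k) (S (S k))).
      2: lia. 2:{ intros j H1 H2. replace j with (S k) by lia. rewrite binR_big by lia. rewrite Rmult_0_r. apply Cmult_0_l. }
      rewrite (cs_shift (fun i => RtoC ((-1)^i * binR k i) * (P g i / P b i))%C), binR_0. rewrite <- cs_scal. 
      rewrite (cs_ext (fun k0 => _ * B k0)%C (fun i => RtoC ((-1) ^ S i * binR k (S i)) * (P g (S i) / P b (S i)))%C).
      change ((-1)^0)%R with 1%R. rewrite Rmult_1_l. change (P g 0) with (RtoC 1). change (P b 0) with (RtoC 1). field; try apply C1_nz.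
      intros i _. unfold B. rewrite !P_shift. simpl pow. rewrite !RtoC_mult. field. split; auto. apply P_nz; auto. }
    rewrite E. rewrite binR_0. replace (b + RtoC 1 - (g + RtoC 1))%C with (b - g)%C by ring.
    rewrite P_up by auto. simpl P. simpl pow. rewrite Rmult_1_l.
    field. repeat split; auto.
Qed.

Definition cen k := Binomial.C (2 * k) k * / 2 ^ (2 * k).

Lemma cen_S k : cen (S k) = cen k * ((1/2 + INR k) / (1 + INR k)).
Proof.
  unfold cen, Binomial.C.
  replace (2 * S k - S k)%nat with (S k) by lia. replace (2 * k - k)%nat with k by lia.
  replace (2 * S k)%nat with (S (S (2 * k))) by lia.
  rewrite !fact_S_INR. change (2 ^ S (S (2*k))) with (2 * (2 * 2^(2*k))).
  rewrite !S_INR, !mult_INR. simpl (INR 2).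
  pose proof (INR_fact_neq_0 k). pose proof (INR_fact_neq_0 (2*k)). pose proof (pos_INR k).
  assert (2 ^ (2 * k) <> 0) by (apply pow_nonzero; lra).

  field. lra.
Qed.

Lemma one_nz j : (RtoC 1 + RtoC (INR j))%C <> RtoC 0.
Proof. rewrite <- RtoC_plus. intro E. apply RtoC_inj in E. pose proof (pos_INR j). lra. Qed.

Lemma RtoC_div' x y : RtoC (x/y) = (RtoC x / RtoC y)%C.
Proof. unfold Rdiv, Cdiv. rewrite RtoC_mult, RtoC_inv'. reflexivity. Qed.

Lemma cen_P k : RtoC (cen k) = (P (RtoC (1/2)) k / P (RtoC 1) k)%C.
Proof.
  induction k.
  - unfold cen. simpl. unfold Binomial.C. simpl. apply injective_projections; simpl; field.
  - rewrite cen_S, RtoC_mult, IHk. simpl P.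
    pose proof (P_nz (RtoC 1) k one_nz).
    pose proof (one_nz k).
    rewrite (RtoC_div' (1/2 + INR k)), !RtoC_plus.
    field. split; auto.
Qed.

Lemma tr_cen k : tr (fun i => RtoC (cen i)) k = RtoC (cen k).
Proof.
  unfold tr. rewrite (cs_ext _ (fun i => RtoC ((-1)^i * binR k i) * (P (RtoC (1/2)) i / P (RtoC 1) i))%C)
    by (intros; rewrite cen_P; auto).
  rewrite CV. rewrite cen_P. f_equal. f_equal. rewrite <- RtoC_minus. f_equal. field.
  intros j. apply one_nz.
Qed.

Lemma RtoC_inj' x y : RtoC x = RtoC y -> x = y.
Proof. intros E. apply (f_equal fst) in E. exact E. Qed.

Lemma part1 n : rsum (fun k => (-1)^k * Binomial.C n k * / 2^(2*k) * Binomial.C (2*k) k * H2 k) (S n)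
  = Binomial.C (2*n) n * / 2^(2*n) * H2 n
    - rsum (fun k => (H n - H k)/(INR n - INR k) * Binomial.C (2*k) k * / 2^(2*k)) n.
Proof.
  apply RtoC_inj'. rewrite !rsum_rs, RtoC_minus, !RtoC_rs.
  pose proof (CORE n (fun i => RtoC (cen i))) as HC.
  rewrite (cs_ext _ (fun k => RtoC ((-1)^k * binR n k) * tr (fun i => RtoC (cen i)) k * RtoC (H2 k))%C).
  2:{ intros k Hk. rewrite tr_cen. rewrite <- !RtoC_mult. f_equal. rewrite binR_C by lia. unfold cen. ring. }
  rewrite HC. rewrite RtoC_mult. f_equal. apply cs_ext. intros k _. rewrite <- RtoC_mult. f_equal.
  unfold wnk, cen. ring.
Qed.

Lemma Rabs_le_inv a b : Rabs a <= b -> -b <= a <= b.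
Proof. intros Hab. destruct (Rcase_abs a) as [Ha|Ha]; [rewrite Rabs_left in Hab by auto|rewrite Rabs_right in Hab by auto]; lra. Qed.

Lemma exp_est x : Rabs x <= 1/2 ->
  Rabs (exp x - 1 - x) <= 2 * x^2 /\ exp x <= 2 /\ Rabs (exp x - 1) <= 2 * Rabs x.
Proof.
  intros Hx. apply Rabs_le_inv in Hx.
  pose proof (exp_ineq1_le x) as H1. pose proof (exp_ineq1_le (- x)) as H2.
  rewrite exp_Ropp in H2. pose proof (exp_pos x) as H3.
  assert (H4 : exp x * (1 - x) <= 1).
  { apply Rmult_le_compat_l with (r := exp x) in H2; [|lra].
    rewrite Rinv_r in H2 by lra. lra. }
  assert (H5 : exp x <= 1 + x + 2 * x^2) by nra.
  repeat split.
  - apply Rabs_le. split; nra.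
  - nra.
  - apply Rabs_le. destruct (Rle_dec 0 x). rewrite Rabs_right by lra. nra. rewrite Rabs_left by lra. nra.
Qed.

Lemma sin_est0 y : 0 <= y <= 1 -> Rabs (sin y - y) <= y^2.
Proof.
  intros Hy. destruct (pre_sin_bound y 0) as [A B]; try lra.
  unfold sin_approx, sin_term in A, B. simpl in A, B.
  assert (A' : y - y^3/6 <= sin y) by (eapply Rle_trans; [|exact A]; right; field).
  assert (B' : sin y <= y - y^3/6 + y^5/120) by (eapply Rle_trans; [exact B|]; right; field).
  assert (0 <= y^2) by nra. assert (y^3 <= y^2) by nra. assert (0 <= y^3) by nra.
  assert (y^5 <= y^3) by nra.
  apply Rabs_le. split; nra.
Qed.

Lemma sin_est y : Rabs y <= 1 -> Rabs (sin y - y) <= y^2.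
Proof.
  intros Hy. destruct (Rle_dec 0 y).
  - apply sin_est0. apply Rabs_le_inv in Hy. lra.
  - replace (sin y - y) with (- (sin (-y) - (-y))) by (rewrite sin_neg; ring).
    rewrite Rabs_Ropp. replace (y^2) with ((-y)^2) by ring. apply sin_est0. apply Rabs_le_inv in Hy. lra.
Qed.

Lemma cos_est y : Rabs y <= 1 -> Rabs (cos y - 1) <= y^2.
Proof.
  intros Hy. apply Rabs_le_inv in Hy. destruct (pre_cos_bound y 0) as [A B]; try lra.
  unfold cos_approx, cos_term in A, B. simpl in A, B.
  assert (A' : 1 - y^2/2 <= cos y) by (eapply Rle_trans; [|exact A]; right; field).
  pose proof (COS_bound y). assert (0 <= y^2) by nra.
  apply Rabs_le. split; nra.
Qed.

Lemma adj_lim (x phi : nat -> R) :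
  (forall m, Rabs (x (S m) - x m) <= phi m - phi (S m)) -> is_lim_seq phi 0 ->
  exists l : R, is_lim_seq x l /\ Rabs (l - x O) <= phi O.
Proof.
  intros Hx Hphi.
  set (u := fun m => x m - phi m). set (v := fun m => x m + phi m).
  assert (Hu : forall n, u n <= u (S n)). { intros n. unfold u. pose proof (Rabs_le_inv _ _ (Hx n)). lra. }
  assert (Hv : forall n, v (S n) <= v n). { intros n. unfold v. pose proof (Rabs_le_inv _ _ (Hx n)). lra. }
  assert (H2phi : is_lim_seq (fun n => 2 * phi n) 0).
  { replace (Finite 0) with (Rbar_mult 2 0) by (simpl; f_equal; ring). apply is_lim_seq_scal_l. auto. }
  destruct (ex_lim_seq_adj u v Hu Hv) as [[l Hl] _].
  { eapply is_lim_seq_ext; [|exact H2phi]. intros n; unfold u, v; ring. }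
  assert (Hxl : is_lim_seq x l).
  { eapply is_lim_seq_ext with (u := fun n => u n + phi n). intros; unfold u; ring.
    replace (Finite l) with (Finite (l + 0)) by (f_equal; ring). apply is_lim_seq_plus'; auto. }
  assert (Hvl : is_lim_seq v l).
  { eapply is_lim_seq_ext with (u := fun n => x n + phi n). intros; unfold v; ring.
    replace (Finite l) with (Finite (l + 0)) by (f_equal; ring). apply is_lim_seq_plus'; auto. }
  assert (Hu0 : forall n, u O <= u n). { induction n. lra. eapply Rle_trans; eauto. }
  assert (Hv0 : forall n, v n <= v O). { induction n. lra. eapply Rle_trans; eauto. }
  assert (B1 : Rbar_le (u O) l). { eapply is_lim_seq_le; [exact Hu0| apply is_lim_seq_const | exact Hl]. }
  assert (B2 : Rbar_le l (v O)). { eapply is_lim_seq_le; [exact Hv0| exact Hvl | apply is_lim_seq_const]. }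
  simpl in B1, B2. unfold u, v in B1, B2.
  exists l. split; auto. apply Rabs_le. split; lra.
Qed.

Definition clim (u : nat -> C) (L : C) :=
  is_lim_seq (fun n => Re (u n)) (Re L) /\ is_lim_seq (fun n => Im (u n)) (Im L).

Lemma inv_INR_lim N : is_lim_seq (fun m => / INR (N + m)) 0.
Proof.
  assert (Hl : is_lim_seq (fun m => / INR m) 0).
  { replace (Finite 0) with (Rbar_inv p_infty) by reflexivity.
    apply is_lim_seq_inv. apply is_lim_seq_INR. discriminate. }
  apply (is_lim_seq_incr_n (fun m => / INR m) N 0) in Hl.
  eapply is_lim_seq_ext; [|exact Hl]. intros; simpl. rewrite Nat.add_comm. auto.
Qed.

Lemma Re_minus (a b : C) : Re (a - b)%C = Re a - Re b.
Proof. destruct a, b; simpl; ring. Qed.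
Lemma Im_minus (a b : C) : Im (a - b)%C = Im a - Im b.
Proof. destruct a, b; simpl; ring. Qed.
Lemma Re_le_Cmod c : Rabs (Re c) <= Cmod c.
Proof. pose proof (Rmax_Cmod c). pose proof (Rmax_l (Rabs (fst c)) (Rabs (snd c))). unfold Re. lra. Qed.
Lemma Im_le_Cmod c : Rabs (Im c) <= Cmod c.
Proof. pose proof (Rmax_Cmod c). pose proof (Rmax_r (Rabs (fst c)) (Rabs (snd c))). unfold Im. lra. Qed.

Lemma sqrt2_lt2 : sqrt 2 < 2.
Proof. pose proof (sqrt_sqrt 2). pose proof (sqrt_pos 2). nra. Qed.

Lemma prod_lim (g : nat -> C) (K : R) (N0 : nat) : 0 < K ->
  (forall n, (N0 <= n)%nat -> Cmod (g (S n) - g n)%C <= K / (INR n * INR (S n)) * Cmod (g n)) ->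
  (forall n, (1 <= n)%nat -> g n <> RtoC 0) ->
  exists L, L <> RtoC 0 /\ clim g L.
Proof.
  intros HK Hg Hnz.
  destruct (archimed_cor1 (/(8*K))) as [N1 [HN1 HN1pos]].
  { apply Rinv_0_lt_compat. lra. }
  set (N := (N1 + N0 + 1)%nat).
  assert (HNpos : 0 < INR N) by (apply lt_0_INR; unfold N; lia).
  assert (HKN : K / INR N <= 1/8).
  { assert (INR N1 <= INR N) by (apply le_INR; unfold N; lia).
    assert (0 < INR N1) by (apply lt_0_INR; lia).
    assert (/ INR N <= / INR N1) by (apply Rinv_le_contravar; lra).
    assert (K * / INR N1 < 1/8).
    { apply Rmult_lt_compat_l with (r := K) in HN1; auto. rewrite Rinv_mult in HN1.
      replace (K * (/ 8 * / K)) with (/8) in HN1 by (field; lra). lra. }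
    unfold Rdiv. nra. }
  set (c := Cmod (g N)).
  assert (Hc : 0 < c) by (apply Cmod_gt_0; apply Hnz; unfold N; lia).
  assert (Bnd : forall m, Cmod (g (N + m)%nat) <= c * exp (K * (/ INR N - / INR (N + m)))).
  { induction m.
    - rewrite Nat.add_0_r. replace (K * (/ INR N - / INR N)) with 0 by ring. rewrite exp_0. fold c. lra.
    - replace (N + S m)%nat with (S (N + m)) by lia.
      set (a := INR (N + m)).
      assert (Ha : 0 < a) by (apply lt_0_INR; unfold N; lia).
      assert (HSa : INR (S (N + m)) = a + 1) by (rewrite S_INR; auto).
      pose proof (Hg (N + m)%nat ltac:(unfold N; lia)) as Hd. fold a in Hd. rewrite HSa in Hd.
      pose proof (Cmod_triangle (g (N+m)%nat) (g (S (N + m)) - g (N + m)%nat)%C) as Ht.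
      replace (g (N + m)%nat + (g (S (N + m)) - g (N + m)%nat))%C with (g (S (N+m))) in Ht by ring.
      pose proof (exp_ineq1_le (K / (a * (a + 1)))) as He.
      replace (K * (/ INR N - / INR (S (N + m)))) with (K / (a * (a+1)) + K * (/ INR N - / a)).
      2:{ rewrite HSa. field. lra. }
      rewrite exp_plus.
      assert (0 <= K / (a * (a + 1))) by (apply Rlt_le, Rdiv_lt_0_compat; nra).
      pose proof (Cmod_ge_0 (g (N + m)%nat)).
      pose proof (exp_pos (K * (/ INR N - / a))).
      change (INR (N + m)) with a in IHm.
      set (X := Cmod (g (N + m)%nat)) in *. set (d := K / (a * (a + 1))) in *.
      set (E1 := exp d) in *. set (E2 := exp (K * (/ INR N - / a))) in *.
      assert (Cmod (g (S (N + m))) <= (1 + d) * X) by nra.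
      assert ((1 + d) * X <= E1 * X) by nra.
      assert (E1 * X <= E1 * (c * E2)) by (apply Rmult_le_compat_l; lra).
      nra. }
  assert (Bnd2 : forall m, Cmod (g (N + m)%nat) <= 2 * c).
  { intros m. eapply Rle_trans; [apply Bnd|]. rewrite (Rmult_comm 2 c). apply Rmult_le_compat_l; [lra|].
    assert (0 < INR (N + m)) by (apply lt_0_INR; unfold N; lia).
    assert (INR N <= INR (N + m)) by (apply le_INR; lia).
    assert (/ INR (N + m) <= / INR N) by (apply Rinv_le_contravar; lra).
    assert (0 < / INR (N + m)) by (apply Rinv_0_lt_compat; lra).
    destruct (exp_est (K * (/ INR N - / INR (N + m)))) as [_ [E _]]; [|exact E].
    apply Rabs_le. unfold Rdiv in HKN. split; nra. }
  set (phi := fun m => K * (2 * c) / INR (N + m)).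
  assert (Hphi : is_lim_seq phi 0).
  { unfold phi. replace (Finite 0) with (Rbar_mult (K * (2 * c)) 0) by (simpl; f_equal; ring).
    apply is_lim_seq_scal_l. apply inv_INR_lim. }
  assert (Hdiff : forall m, Cmod (g (N + S m)%nat - g (N + m)%nat)%C <= phi m - phi (S m)).
  { intros m. replace (N + S m)%nat with (S (N + m)) by lia.
    set (a := INR (N + m)).
    assert (Ha : 0 < a) by (apply lt_0_INR; unfold N; lia).
    assert (HSa : INR (S (N + m)) = a + 1) by (rewrite S_INR; auto).
    pose proof (Hg (N + m)%nat ltac:(unfold N; lia)) as Hd. fold a in Hd. rewrite HSa in Hd.
    unfold phi. replace (N + S m)%nat with (S (N + m)) by lia. fold a. rewrite HSa.
    eapply Rle_trans; [exact Hd|].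
    replace (K * (2 * c) / a - K * (2 * c) / (a + 1)) with (K / (a * (a + 1)) * (2 * c)) by (field; lra).
    apply Rmult_le_compat_l. apply Rlt_le, Rdiv_lt_0_compat; nra. apply Bnd2. }
  destruct (adj_lim (fun m => Re (g (N + m)%nat)) phi) as [lr [Hlr Blr]]; auto.
  { intros m. rewrite <- Re_minus. eapply Rle_trans; [apply Re_le_Cmod| apply Hdiff]. }
  destruct (adj_lim (fun m => Im (g (N + m)%nat)) phi) as [li [Hli Bli]]; auto.
  { intros m. rewrite <- Im_minus. eapply Rle_trans; [apply Im_le_Cmod| apply Hdiff]. }
  exists (lr, li). split.
  - intros E. injection E as E1 E2. rewrite Nat.add_0_r in Blr, Bli. subst lr li.
    unfold phi in Blr, Bli. rewrite Nat.add_0_r in Blr, Bli.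
    assert (K * (2 * c) / INR N <= c / 4) by (unfold Rdiv in *; nra).
    pose proof (Cmod_2Rmax (g N)).
    assert (Rmax (Rabs (fst (g N))) (Rabs (snd (g N))) <= c / 4).
    { apply Rmax_lub; unfold Re, Im in *; rewrite Rminus_0_l, Rabs_Ropp in *; lra. }
    pose proof sqrt2_lt2. pose proof (sqrt_pos 2). fold c in H0.
    assert (0 <= Rmax (Rabs (fst (g N))) (Rabs (snd (g N)))) by (eapply Rle_trans; [apply Rabs_pos| apply Rmax_l]).
    nra.
  - split; simpl.
    + apply (is_lim_seq_incr_n _ N). eapply is_lim_seq_ext; [|exact Hlr]. intros; simpl. rewrite Nat.add_comm; auto.
    + apply (is_lim_seq_incr_n _ N). eapply is_lim_seq_ext; [|exact Hli]. intros; simpl. rewrite Nat.add_comm; auto.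
Qed.

Lemma fold_mul_C (f : nat -> C) l a :
  fold_right (fun k acc => (f k * acc)%C) a l = (fold_right (fun k acc => (f k * acc)%C) (RtoC 1) l * a)%C.
Proof. induction l as [|x l IH]; simpl. ring. rewrite IH; ring. Qed.

Lemma cprod_S f m : cprod f (S m) = (cprod f m * f m)%C.
Proof. unfold cprod. rewrite seq_S, fold_right_app. simpl. rewrite fold_mul_C. ring. Qed.

Lemma cprod_nz f m : (forall j, f j <> RtoC 0) -> cprod f m <> RtoC 0.
Proof. intros Hf. induction m. apply C1_nz. rewrite cprod_S. apply Cmult_neq_0; auto. Qed.

Lemma cprod_shift z m : (z * cprod (fun j => z + RtoC 1 + RtoC (INR j)) m)%C = cprod (fun j => z + RtoC (INR j))%C (S m).
Proof. induction m. unfold cprod; simpl. ring.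
  rewrite (cprod_S (fun j => z + RtoC 1 + RtoC (INR j))%C), (cprod_S (fun j => z + RtoC (INR j))%C (S m)), <- IHm.
  rewrite S_INR, RtoC_plus. ring. Qed.

Lemma Rez_nz z j : 0 < Re z -> (z + RtoC (INR j))%C <> RtoC 0.
Proof. intros Hz E. apply (f_equal Re) in E. simpl in E. pose proof (pos_INR j). unfold Re in *. simpl in *. lra. Qed.

Lemma cpow_nz a z : cpow a z <> RtoC 0.
Proof. unfold cpow. apply Cmult_neq_0. intro E. apply (f_equal Re) in E. simpl in E. pose proof (exp_pos (Re z * ln a)). lra.
  intro E. pose proof (sin2_cos2 (Im z * ln a)). injection E as E1 E2. rewrite E1, E2 in H. unfold Rsqr in H. lra. Qed.

Definition Ep (z : C) (s : R) : C := (exp (Re z * s) * cos (Im z * s), exp (Re z * s) * sin (Im z * s)).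

Lemma cpow_step n z : (1 <= n)%nat ->
  cpow (INR (S n)) z = (cpow (INR n) z * Ep z (ln (INR (S n)) - ln (INR n)))%C.
Proof.
  intros Hn. unfold cpow, Ep. set (s := ln (INR (S n)) - ln (INR n)).
  replace (ln (INR (S n))) with (ln (INR n) + s) by (unfold s; ring).
  rewrite !Rmult_plus_distr_l, exp_plus, cos_plus, sin_plus.
  apply injective_projections; simpl; ring.
Qed.

Lemma cpow_S1 n z : (1 <= n)%nat -> cpow (INR n) (z + RtoC 1) = (RtoC (INR n) * cpow (INR n) z)%C.
Proof.
  intros Hn. unfold cpow. assert (0 < INR n) by (apply lt_0_INR; lia).
  replace (Re (z + RtoC 1)) with (Re z + 1) by (unfold Re, Im; simpl; ring).
  replace (Im (z + RtoC 1)) with (Im z) by (unfold Re, Im; simpl; ring).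
  rewrite Rmult_plus_distr_r, exp_plus, Rmult_1_l, exp_ln by auto.
  apply injective_projections; simpl; ring.
Qed.

Lemma s_bounds n : (1 <= n)%nat ->
  / INR (S n) <= ln (INR (S n)) - ln (INR n) <= / INR n.
Proof.
  intros Hn. assert (Hp : 0 < INR n) by (apply lt_0_INR; lia). rewrite S_INR.
  set (s := ln (INR n + 1) - ln (INR n)).
  assert (Es : exp s = (INR n + 1) / INR n).
  { unfold s. unfold Rminus. rewrite exp_plus, exp_Ropp, !exp_ln by lra. field. lra. }
  pose proof (exp_ineq1_le s). pose proof (exp_ineq1_le (- s)).
  rewrite exp_Ropp, Es in H0. rewrite Es in H.
  replace (/ ((INR n + 1) / INR n)) with (INR n / (INR n + 1)) in H0 by (field; lra).
  split.
  - apply Rmult_le_reg_l with (r := INR n + 1). lra. rewrite Rinv_r by lra.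
    apply Rmult_le_compat_l with (r := INR n + 1) in H0; [|lra].
    replace ((INR n + 1) * (INR n / (INR n + 1))) with (INR n) in H0 by (field; lra). lra.
  - apply Rmult_le_reg_l with (r := INR n). lra. rewrite Rinv_r by lra.
    apply Rmult_le_compat_l with (r := INR n) in H; [|lra].
    replace (INR n * ((INR n + 1) / INR n)) with (INR n + 1) in H by (field; lra). lra.
Qed.

Lemma Cmod_le_sum w : Cmod w <= 2 * (Rabs (Re w) + Rabs (Im w)).
Proof.
  pose proof (Cmod_2Rmax w). pose proof sqrt2_lt2. pose proof (sqrt_pos 2).
  assert (Rmax (Rabs (fst w)) (Rabs (snd w)) <= Rabs (Re w) + Rabs (Im w)).
  { apply Rmax_lub; unfold Re, Im; pose proof (Rabs_pos (fst w)); pose proof (Rabs_pos (snd w)); lra. }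
  assert (0 <= Rmax (Rabs (fst w)) (Rabs (snd w))) by (eapply Rle_trans; [apply Rabs_pos| apply Rmax_l]).
  nra.
Qed.

Lemma Ep_est z s : Rabs (Re z * s) <= 1/2 -> Rabs (Im z * s) <= 1 ->
  Cmod (Ep z s - RtoC 1 - z * RtoC s)%C <= (6 * Re z ^ 2 + 10 * Im z ^ 2 + 1) * s^2.
Proof.
  intros Ha Hb. eapply Rle_trans; [apply Cmod_le_sum|].
  set (a := Re z) in *. set (b := Im z) in *.
  replace (Re (Ep z s - RtoC 1 - z * RtoC s)%C) with ((exp (a * s) - 1 - a * s) + exp (a * s) * (cos (b * s) - 1))
    by (unfold Ep, a, b, Re, Im; simpl; ring).
  replace (Im (Ep z s - RtoC 1 - z * RtoC s)%C) with (exp (a * s) * (sin (b * s) - b * s) + (exp (a * s) - 1) * (b * s))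
    by (unfold Ep, a, b, Re, Im; simpl; ring).
  destruct (exp_est (a * s) Ha) as [E1 [E2 E3]].
  pose proof (cos_est (b * s) Hb) as C1. pose proof (sin_est (b * s) Hb) as S1.
  pose proof (exp_pos (a * s)) as E0.
  set (e := exp (a * s)) in *.
  assert (R1 : Rabs ((e - 1 - a * s) + e * (cos (b * s) - 1)) <= 2 * (a*s)^2 + 2 * (b*s)^2).
  { eapply Rle_trans; [apply Rabs_triang|]. rewrite Rabs_mult, (Rabs_right e) by lra.
    assert (e * Rabs (cos (b * s) - 1) <= 2 * (b * s)^2).
    { apply Rle_trans with (2 * Rabs (cos (b * s) - 1)). apply Rmult_le_compat_r; [apply Rabs_pos|lra].
      lra. }
    lra. }
  assert (R2 : Rabs (e * (sin (b * s) - b * s) + (e - 1) * (b * s)) <= 2 * (b*s)^2 + 2 * Rabs (a*s) * Rabs (b*s)).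
  { eapply Rle_trans; [apply Rabs_triang|]. rewrite (Rabs_mult e), (Rabs_mult (e - 1) (b * s)), (Rabs_right e) by lra.
    assert (e * Rabs (sin (b * s) - b * s) <= 2 * (b * s)^2).
    { apply Rle_trans with (2 * Rabs (sin (b * s) - b * s)). apply Rmult_le_compat_r; [apply Rabs_pos|lra].
      lra. }
    assert (Rabs (e - 1) * Rabs (b * s) <= 2 * Rabs (a * s) * Rabs (b * s)).
    { apply Rmult_le_compat_r; [apply Rabs_pos|lra]. }
    lra. }
  assert (Rabs (a * s) * Rabs (b * s) <= ((a*s)^2 + (b*s)^2) / 2).
  { rewrite <- Rabs_mult. pose proof (Rabs_pos (a*s*(b*s))). pose proof (pow2_ge_0 (a*s + b*s)). pose proof (pow2_ge_0 (a*s - b*s)).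
    destruct (Rcase_abs (a * s * (b * s))); [rewrite Rabs_left by auto|rewrite Rabs_right by auto]; nra. }
  assert (0 <= s^2) by nra.
  replace ((6 * a ^ 2 + 10 * b ^ 2 + 1) * s ^ 2) with (6 * (a*s)^2 + 10 * (b*s)^2 + s^2) by ring.
  lra.
Qed.

Lemma gauss_ratio z n : 0 < Re z -> (1 <= n)%nat ->
  gauss_seq z (S n) = (gauss_seq z n * (RtoC (INR (S n)) * Ep z (ln (INR (S n)) - ln (INR n)) / (z + RtoC (INR (S n)))))%C.
Proof.
  intros Hz Hn. unfold gauss_seq.
  rewrite (cprod_S _ (S n)), cpow_step by auto.
  change (fact (S n)) with (S n * fact n)%nat. rewrite mult_INR, RtoC_mult.
  pose proof (cprod_nz (fun j => z + RtoC (INR j))%C (S n) (fun j => Rez_nz z j Hz)).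
  pose proof (Rez_nz z (S n) Hz).
  field. auto.
Qed.

Lemma ratio_bound z : 0 < Re z -> exists K N0, 0 < K /\ (1 <= N0)%nat /\ forall n, (N0 <= n)%nat ->
  Cmod (RtoC (INR (S n)) * Ep z (ln (INR (S n)) - ln (INR n)) / (z + RtoC (INR (S n))) - RtoC 1)%C
  <= K / (INR n * INR (S n)).
Proof.
  intros Hz. set (a := Re z) in *. set (b := Im z) in *.
  set (K1 := 6 * a ^ 2 + 10 * b ^ 2 + 1).
  assert (HK1 : 0 < K1) by (unfold K1; nra).
  pose proof (Cmod_ge_0 z) as Hcz.
  exists (2 * K1 + Cmod z + 1).
  destruct (archimed_cor1 (/ (2 * Rabs a + Rabs b + 1))) as [N0 [HN0 HN0p]].
  { apply Rinv_0_lt_compat. pose proof (Rabs_pos a); pose proof (Rabs_pos b); lra. }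
  exists N0. split; [lra|]. split; [lia|].
  intros n Hn.
  assert (HxN : 2 * Rabs a + Rabs b + 1 <= INR n).
  { assert (0 < INR N0) by (apply lt_0_INR; lia).
    assert (INR N0 <= INR n) by (apply le_INR; lia).
    assert (0 < 2 * Rabs a + Rabs b + 1) by (pose proof (Rabs_pos a); pose proof (Rabs_pos b); lra).
    apply Rinv_lt_cancel in HN0; [lra|]. auto. }
  set (x := INR n) in *. assert (HSx : INR (S n) = x + 1) by (rewrite S_INR; auto).
  pose proof (Rabs_pos a). pose proof (Rabs_pos b).
  assert (Hx1 : 1 <= x) by lra.
  pose proof (s_bounds n ltac:(lia)) as [Hs1 Hs2]. fold x in Hs1, Hs2. rewrite HSx in *.
  set (s := ln (x + 1) - ln x) in *.
  assert (Hsp : 0 < s). { assert (0 < / (x + 1)) by (apply Rinv_0_lt_compat; lra). lra. }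
  assert (Hsx : s * x <= 1). { apply Rmult_le_compat_r with (r := x) in Hs2; [|lra]. rewrite Rinv_l in Hs2; lra. }
  assert (Hsx1 : 1 <= s * (x + 1)). { apply Rmult_le_compat_r with (r := x + 1) in Hs1; [|lra]. rewrite Rinv_l in Hs1; lra. }
  assert (Ha : Rabs (a * s) <= 1/2).
  { rewrite Rabs_mult, (Rabs_right s) by lra. nra. }
  assert (Hb : Rabs (b * s) <= 1).
  { rewrite Rabs_mult, (Rabs_right s) by lra. nra. }
  pose proof (Ep_est z s Ha Hb) as HE. fold a b K1 in HE.
  assert (Hnz : (z + RtoC (x + 1))%C <> RtoC 0).
  { replace (x + 1) with (INR (S n)) by (rewrite S_INR; auto). apply Rez_nz; auto. }
  replace (RtoC (x + 1) * Ep z s / (z + RtoC (x + 1)) - RtoC 1)%C with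
    ((RtoC (x + 1) * (Ep z s - RtoC 1 - z * RtoC s) + z * RtoC ((x + 1) * s - 1)) / (z + RtoC (x + 1)))%C.
  2:{ rewrite RtoC_minus, RtoC_mult. field. auto. }
  rewrite Cmod_div by auto.
  assert (Hden : x + 1 <= Cmod (z + RtoC (x + 1))%C).
  { eapply Rle_trans; [|apply Re_le_Cmod]. replace (Re (z + RtoC (x + 1))%C) with (a + (x + 1)) by (unfold a, Re; simpl; ring).
    rewrite Rabs_right; lra. }
  assert (Hnum : Cmod (RtoC (x + 1) * (Ep z s - RtoC 1 - z * RtoC s) + z * RtoC ((x + 1) * s - 1))%C
                 <= (x + 1) * (K1 * s^2) + Cmod z * ((x + 1) * s - 1)).
  { eapply Rle_trans; [apply Cmod_triangle|]. rewrite !Cmod_mult, !Cmod_R, !Rabs_right by lra.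
    apply Rplus_le_compat_r. apply Rmult_le_compat_l; lra. }
  set (A := (x + 1) * (K1 * s ^ 2) + Cmod z * ((x + 1) * s - 1)) in *.
  assert (HA : A * x <= 2 * K1 + Cmod z).
  { unfold A.
    assert (Hsx0 : 0 <= s * x) by nra.
    assert (Q1 : (s*x)*(s*x) <= 1) by nra.
    assert (Hs1' : s <= 1). { assert (/ x <= 1). { rewrite <- Rinv_1. apply Rinv_le_contravar; lra. } lra. }
    assert (Q2 : (s*x)*s <= 1) by nra.
    assert (Q4 : K1 * ((s*x)*(s*x) + (s*x)*s) <= 2*K1) by nra.
    assert (Q5 : ((x + 1) * s - 1) * x <= 1).
    { assert (x * (1 - s * x) >= 0) by nra. nra. }
    assert (Q6 : Cmod z * (((x + 1) * s - 1) * x) <= Cmod z) by nra.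
    replace (((x + 1) * (K1 * s ^ 2) + Cmod z * ((x + 1) * s - 1)) * x) with
      (K1 * ((s*x)*(s*x) + (s*x)*s) + Cmod z * (((x + 1) * s - 1) * x)) by ring.
    lra. }
  assert (0 <= A). { unfold A. pose proof (pow2_ge_0 s).
    assert (0 <= (x+1)*(K1*s^2)) by (apply Rmult_le_pos; [lra| apply Rmult_le_pos; lra]).
    assert (0 <= Cmod z * ((x+1)*s - 1)) by (apply Rmult_le_pos; lra). lra. }
  apply Rle_trans with (A / (x + 1)).
  - unfold Rdiv. apply Rle_trans with (A * / Cmod (z + RtoC (x + 1))%C).
    apply Rmult_le_compat_r; [|auto]. apply Rlt_le, Rinv_0_lt_compat. lra.
    apply Rmult_le_compat_l; auto. apply Rinv_le_contravar; lra.
  - apply Rmult_le_reg_r with (r := x * (x + 1)). nra.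
    replace (A / (x + 1) * (x * (x + 1))) with (A * x) by (field; lra).
    replace ((2 * K1 + Cmod z + 1) / (x * (x + 1)) * (x * (x + 1))) with (2 * K1 + Cmod z + 1) by (field; lra).
    lra.
Qed.

Lemma Cdiv_nz (a b : C) : a <> RtoC 0 -> b <> RtoC 0 -> (a / b)%C <> RtoC 0.
Proof. intros Ha Hb E. apply Ha. replace a with ((a / b) * b)%C by (field; auto). rewrite E. ring. Qed.

Lemma gauss_nz z n : 0 < Re z -> gauss_seq z n <> RtoC 0.
Proof.
  intros Hz. unfold gauss_seq. apply Cdiv_nz. apply Cmult_neq_0. 
  intro E. apply (f_equal fst) in E. apply (INR_fact_neq_0 n). auto.
  apply cpow_nz. apply cprod_nz. intros j; apply Rez_nz; auto.
Qed.

Lemma gauss_conv z : 0 < Re z -> exists L, L <> RtoC 0 /\ clim (gauss_seq z) L.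
Proof.
  intros Hz. destruct (ratio_bound z Hz) as [K [N0 [HK [HN0 Hb]]]].
  apply (prod_lim _ K N0 HK).
  - intros n Hn. rewrite gauss_ratio by (auto; lia).
    set (R := (RtoC (INR (S n)) * Ep z (ln (INR (S n)) - ln (INR n)) / (z + RtoC (INR (S n))))%C) in *.
    replace (gauss_seq z n * R - gauss_seq z n)%C with (gauss_seq z n * (R - RtoC 1))%C by ring.
    rewrite Cmod_mult, Rmult_comm. apply Rmult_le_compat_r. apply Cmod_ge_0. apply Hb; auto.
  - intros n _. apply gauss_nz; auto.
Qed.

Lemma CGamma_lim z L : clim (gauss_seq z) L -> CGamma z = L.
Proof.
  intros [H1 H2]. unfold CGamma. rewrite (is_lim_seq_unique _ _ H1), (is_lim_seq_unique _ _ H2).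
  simpl. destruct L; reflexivity.
Qed.

Lemma Gamma_nz z : 0 < Re z -> CGamma z <> RtoC 0.
Proof. intros Hz. destruct (gauss_conv z Hz) as [L [HL HcL]]. rewrite (CGamma_lim _ _ HcL). auto. Qed.

Lemma clim_mult u v A B : clim u A -> clim v B -> clim (fun n => u n * v n)%C (A * B)%C.
Proof.
  intros [Hu1 Hu2] [Hv1 Hv2]. split; simpl.
  - apply is_lim_seq_minus'; apply is_lim_seq_mult'; auto.
  - apply is_lim_seq_plus'; apply is_lim_seq_mult'; auto.
Qed.

Lemma clim_Cmod u L e : (forall n, Cmod (u n - L)%C <= e n) -> is_lim_seq e 0 -> clim u L.
Proof.
  intros Hb He.
  assert (Hlo : is_lim_seq (fun n => Re L - e n) (Re L)).
  { replace (Finite (Re L)) with (Finite (Re L - 0)) by (f_equal; ring). apply is_lim_seq_minus'; auto. apply is_lim_seq_const. }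
  assert (Hhi : is_lim_seq (fun n => Re L + e n) (Re L)).
  { replace (Finite (Re L)) with (Finite (Re L + 0)) by (f_equal; ring). apply is_lim_seq_plus'; auto. apply is_lim_seq_const. }
  assert (Hlo' : is_lim_seq (fun n => Im L - e n) (Im L)).
  { replace (Finite (Im L)) with (Finite (Im L - 0)) by (f_equal; ring). apply is_lim_seq_minus'; auto. apply is_lim_seq_const. }
  assert (Hhi' : is_lim_seq (fun n => Im L + e n) (Im L)).
  { replace (Finite (Im L)) with (Finite (Im L + 0)) by (f_equal; ring). apply is_lim_seq_plus'; auto. apply is_lim_seq_const. }
  split.
  - apply (is_lim_seq_le_le (fun n => Re L - e n) _ (fun n => Re L + e n)); auto.
    intros n. pose proof (Rabs_le_inv _ _ (Rle_trans _ _ _ (Re_le_Cmod (u n - L)%C) (Hb n))).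
    rewrite Re_minus in H. lra.
  - apply (is_lim_seq_le_le (fun n => Im L - e n) _ (fun n => Im L + e n)); auto.
    intros n. pose proof (Rabs_le_inv _ _ (Rle_trans _ _ _ (Im_le_Cmod (u n - L)%C) (Hb n))).
    rewrite Im_minus in H. lra.
Qed.

Lemma clim_ext_loc u v L N : (forall n, (N <= n)%nat -> u n = v n) -> clim u L -> clim v L.
Proof.
  intros He [H1 H2]. split.
  - apply (is_lim_seq_ext_loc (fun n => Re (u n))); auto. exists N. intros n Hn. rewrite He; auto.
  - apply (is_lim_seq_ext_loc (fun n => Im (u n))); auto. exists N. intros n Hn. rewrite He; auto.
Qed.

Lemma gauss_shift z n : 0 < Re z -> (1 <= n)%nat ->
  gauss_seq (z + RtoC 1) n = (gauss_seq z n * (z * (RtoC (INR n) / (z + RtoC (INR (S n))))))%C.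
Proof.
  intros Hz Hn. unfold gauss_seq. rewrite cpow_S1 by auto.
  assert (Hz0 : z <> RtoC 0). { intro E. rewrite E in Hz. simpl in Hz. lra. }
  pose proof (cprod_shift z (S n)) as HP. rewrite (cprod_S (fun j => z + RtoC (INR j))%C (S n)) in HP.
  set (P1 := cprod (fun j => z + RtoC 1 + RtoC (INR j))%C (S n)) in *.
  set (Pz := cprod (fun j => z + RtoC (INR j))%C (S n)) in *.
  assert (HPz : Pz <> RtoC 0) by (apply cprod_nz; intros; apply Rez_nz; auto).
  pose proof (Rez_nz z (S n) Hz).
  assert (E : P1 = ((Pz * (z + RtoC (INR (S n)))) / z)%C). { rewrite <- HP. field. auto. }
  rewrite E. field. auto.
Qed.

Lemma Gamma_FE z : 0 < Re z -> CGamma (z + RtoC 1) = (z * CGamma z)%C.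
Proof.
  intros Hz. destruct (gauss_conv z Hz) as [L [_ HL]]. rewrite (CGamma_lim z L HL). apply CGamma_lim.
  set (h := fun n => (z * (RtoC (INR n) / (z + RtoC (INR (S n)))))%C).
  assert (Hh : clim h z).
  { apply (clim_Cmod _ _ (fun n => Cmod z * Cmod (z + RtoC 1) * / INR (1 + n))).
    - intros n. unfold h. pose proof (Rez_nz z (S n) Hz).
      replace (z * (RtoC (INR n) / (z + RtoC (INR (S n)))) - z)%C with (- (z * (z + RtoC 1)) / (z + RtoC (INR (S n))))%C.
      2:{ rewrite S_INR, RtoC_plus. rewrite S_INR, RtoC_plus in H. field. auto. }
      rewrite Cmod_div by auto. rewrite Cmod_opp, Cmod_mult.
      assert (Hd : INR (1 + n) <= Cmod (z + RtoC (INR (S n)))%C).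
      { eapply Rle_trans; [|apply Re_le_Cmod]. replace (Re (z + RtoC (INR (S n)))%C) with (Re z + INR (S n)) by (unfold Re; simpl; ring).
        rewrite Rabs_right. simpl (1 + n)%nat. lra. pose proof (pos_INR (S n)). lra. }
      assert (0 < INR (1 + n)) by (apply lt_0_INR; lia).
      unfold Rdiv. apply Rmult_le_compat_l. apply Rmult_le_pos; apply Cmod_ge_0.
      apply Rinv_le_contravar; lra.
    - replace (Finite 0) with (Rbar_mult (Cmod z * Cmod (z + RtoC 1)) 0) by (simpl; f_equal; ring).
      apply is_lim_seq_scal_l. apply inv_INR_lim. }
  pose proof (clim_mult _ _ _ _ HL Hh) as Hm.
  replace (z * L)%C with (L * z)%C by ring.
  apply (clim_ext_loc (fun n => (gauss_seq z n * h n)%C) (gauss_seq (z + RtoC 1)) _ 1%nat); [|exact Hm].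
  intros n Hn. unfold h. rewrite gauss_shift; auto.
Qed.

Lemma Gamma_P z k : 0 < Re z -> CGamma (z + RtoC (INR k))%C = (P z k * CGamma z)%C.
Proof.
  intros Hz. induction k.
  - simpl. replace (z + RtoC 0)%C with z by ring. ring.
  - replace (z + RtoC (INR (S k)))%C with ((z + RtoC (INR k)) + RtoC 1)%C by (rewrite S_INR, RtoC_plus; ring).
    rewrite Gamma_FE. rewrite IHk. simpl. ring.
    unfold Re in *. simpl. pose proof (pos_INR k). lra.
Qed.

Lemma GP z m w : 0 < Re z -> w = (z + RtoC (INR m))%C -> CGamma w = (P z m * CGamma z)%C.
Proof. intros Hz ->. apply Gamma_P; auto. Qed.

Lemma Re_div2 z : Re (z / 2)%C = Re z / 2.
Proof. destruct z as [a b]. unfold Re, Cdiv, Cinv, Cmult. simpl. field. Qed.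
Lemma Re_plus (a b : C) : Re (a + b)%C = Re a + Re b.
Proof. destruct a, b; reflexivity. Qed.
Lemma Re_RtoC r : Re (RtoC r) = r.
Proof. reflexivity. Qed.

Lemma RtoC_2k k : RtoC (INR (2 * k)) = (2 * RtoC (INR k))%C.
Proof. rewrite mult_INR, RtoC_mult. reflexivity. Qed.

Lemma P_double V k : P V (2 * k) = (RtoC (2 ^ (2 * k)) * P (V / 2) k * P (V / 2 + 1 / 2) k)%C.
Proof.
  induction k.
  - simpl. ring.
  - replace (2 * S k)%nat with (S (S (2 * k))) by lia.
    change (P V (S (S (2 * k)))) with (P V (2 * k) * (V + RtoC (INR (2 * k))) * (V + RtoC (INR (S (2 * k)))))%C.
    rewrite IHk. simpl (P _ (S k)).
    change (2 ^ S (S (2 * k))) with (2 * (2 * 2 ^ (2 * k))).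
    rewrite S_INR, !RtoC_plus, RtoC_2k, !RtoC_mult.
    replace (INR (2 * k)) with (2 * INR k) by (rewrite mult_INR; reflexivity).
    field.
Qed.

Ltac reP := rewrite ?Re_plus, ?Re_div2, ?Re_plus, ?Re_RtoC; lra.
Ltac eqP := rewrite ?RtoC_2k; field.

Lemma Pnz z k : 0 < Re z -> P z k <> RtoC 0.
Proof. intros; apply P_nz; intros; apply Rez_nz; auto. Qed.

Lemma termL u v k : -1 < Re u -> -1 < Re v ->
  (cbinom (RtoC (INR (2 * k)) + v) ((RtoC (INR (2 * k)) + v) / 2) / cbinom ((RtoC (INR (2 * k)) + u + v) / 2) (u / 2))%C
  = (RtoC (2 ^ (2 * k)) * (CGamma (v + 1) * CGamma (u/2 + 1) / (CGamma (v/2 + 1) * CGamma ((u+v)/2 + 1)))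
     * (P ((v+1)/2) k / P ((u+v)/2 + 1) k))%C.
Proof.
  intros Hu Hv. unfold cbinom.
  assert (HV : 0 < Re (v + 1)%C) by reP.
  assert (HVh : 0 < Re (v/2 + 1)%C) by reP.
  assert (HUh : 0 < Re (u/2 + 1)%C) by reP.
  assert (HW : 0 < Re ((u+v)/2 + 1)%C) by reP.
  rewrite (GP (v + 1) (2*k) (RtoC (INR (2 * k)) + v + 1)%C) by (auto; eqP).
  rewrite (GP (v/2 + 1) k ((RtoC (INR (2 * k)) + v) / 2 + 1)%C) by (auto; eqP).
  rewrite (GP (v/2 + 1) k (RtoC (INR (2 * k)) + v - (RtoC (INR (2 * k)) + v) / 2 + 1)%C) by (auto; eqP).
  rewrite (GP ((u+v)/2 + 1) k ((RtoC (INR (2 * k)) + u + v) / 2 + 1)%C) by (auto; eqP).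
  rewrite (GP (v/2 + 1) k ((RtoC (INR (2 * k)) + u + v) / 2 - u / 2 + 1)%C) by (auto; eqP).
  rewrite P_double. replace ((v + 1)/2 + 1/2)%C with (v/2 + 1)%C by field.
  pose proof (Gamma_nz _ HV). pose proof (Gamma_nz _ HVh). pose proof (Gamma_nz _ HUh). pose proof (Gamma_nz _ HW).
  pose proof (Pnz _ k HVh). pose proof (Pnz _ k HW).
  field. repeat split; auto.
Qed.

Lemma termR u v k : -1 < Re u -> -1 < Re v ->
  (cbinom (RtoC (INR (2 * k)) + u) ((RtoC (INR (2 * k)) + u) / 2) / cbinom ((RtoC (INR (2 * k)) + u + v) / 2) (v / 2))%C
  = (RtoC (2 ^ (2 * k)) * (CGamma (u + 1) * CGamma (v/2 + 1) / (CGamma (u/2 + 1) * CGamma ((u+v)/2 + 1)))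
     * (P ((u+1)/2) k / P ((u+v)/2 + 1) k))%C.
Proof.
  intros Hu Hv. unfold cbinom.
  assert (HV : 0 < Re (u + 1)%C) by reP.
  assert (HVh : 0 < Re (u/2 + 1)%C) by reP.
  assert (HUh : 0 < Re (v/2 + 1)%C) by reP.
  assert (HW : 0 < Re ((u+v)/2 + 1)%C) by reP.
  rewrite (GP (u + 1) (2*k) (RtoC (INR (2 * k)) + u + 1)%C) by (auto; eqP).
  rewrite (GP (u/2 + 1) k ((RtoC (INR (2 * k)) + u) / 2 + 1)%C) by (auto; eqP).
  rewrite (GP (u/2 + 1) k (RtoC (INR (2 * k)) + u - (RtoC (INR (2 * k)) + u) / 2 + 1)%C) by (auto; eqP).
  rewrite (GP ((u+v)/2 + 1) k ((RtoC (INR (2 * k)) + u + v) / 2 + 1)%C) by (auto; eqP).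
  rewrite (GP (u/2 + 1) k ((RtoC (INR (2 * k)) + u + v) / 2 - v / 2 + 1)%C) by (auto; eqP).
  rewrite P_double. replace ((u + 1)/2 + 1/2)%C with (u/2 + 1)%C by field.
  pose proof (Gamma_nz _ HV). pose proof (Gamma_nz _ HVh). pose proof (Gamma_nz _ HUh). pose proof (Gamma_nz _ HW).
  pose proof (Pnz _ k HVh). pose proof (Pnz _ k HW).
  field. repeat split; auto.
Qed.

Lemma Cdiv_assoc (a b c : C) : (a * b / c = a * (b / c))%C.
Proof. unfold Cdiv. ring. Qed.

Lemma pow2_nz k : RtoC (2 ^ (2 * k)) <> RtoC 0.
Proof. intro E. apply (f_equal fst) in E. simpl in E. apply (pow_nonzero 2 (2*k)); [lra|]. exact E. Qed.

Lemma part2 (n : nat) (u v : C) : (-1 < Re u)%R -> (-1 < Re v)%R ->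
  csum (fun k =>
          RtoC ((-1) ^ k * Binomial.C n k * / 2 ^ (2 * k))
          * cbinom (RtoC (INR (2 * k)) + v) ((RtoC (INR (2 * k)) + v) / 2)
          / cbinom ((RtoC (INR (2 * k)) + u + v) / 2) (u / 2)
          * RtoC (H2 k))%C (S n)
  = (cbinom v (v / 2) / cbinom u (u / 2)
       * cbinom (RtoC (INR (2 * n)) + u) ((RtoC (INR (2 * n)) + u) / 2)
       / cbinom ((RtoC (INR (2 * n)) + u + v) / 2) (v / 2)
       * RtoC (/ 2 ^ (2 * n)) * RtoC (H2 n)
     - cbinom v (v / 2) / cbinom u (u / 2)
       * csum (fun k =>
                 RtoC ((H n - H k) / (INR n - INR k))
                 * cbinom (RtoC (INR (2 * k)) + u) ((RtoC (INR (2 * k)) + u) / 2)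
                 * RtoC (/ 2 ^ (2 * k))
                 / cbinom ((RtoC (INR (2 * k)) + u + v) / 2) (v / 2))%C n)%C.
Proof.
  intros Hu Hv. rewrite !csum_cs.
  assert (HV : 0 < Re (v + 1)%C) by reP.
  assert (HU : 0 < Re (u + 1)%C) by reP.
  assert (HVh : 0 < Re (v/2 + 1)%C) by reP.
  assert (HUh : 0 < Re (u/2 + 1)%C) by reP.
  assert (HW : 0 < Re ((u+v)/2 + 1)%C) by reP.
  pose proof (Gamma_nz _ HV) as G1. pose proof (Gamma_nz _ HU) as G2. pose proof (Gamma_nz _ HVh) as G3.
  pose proof (Gamma_nz _ HUh) as G4. pose proof (Gamma_nz _ HW) as G5.
  set (W := ((u+v)/2 + 1)%C) in *.
  set (cL := (CGamma (v + 1) * CGamma (u/2 + 1) / (CGamma (v/2 + 1) * CGamma W))%C).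
  set (cR := (CGamma (u + 1) * CGamma (v/2 + 1) / (CGamma (u/2 + 1) * CGamma W))%C).
  set (t' := fun k => (P ((u+1)/2) k / P W k)%C).
  assert (Hcc : (cbinom v (v / 2) / cbinom u (u / 2) * cR = cL)%C).
  { unfold cbinom, cR, cL. replace (v - v/2 + 1)%C with (v/2 + 1)%C by field.
    replace (u - u/2 + 1)%C with (u/2 + 1)%C by field. field. repeat split; auto. }
  assert (HcR : cR <> RtoC 0).
  { unfold cR. apply Cdiv_nz; apply Cmult_neq_0; auto. }
  set (cc := (cbinom v (v / 2) / cbinom u (u / 2))%C) in *.
  assert (Hcc0 : cc <> RtoC 0).
  { intro E. rewrite E in Hcc. assert (HcL : cL <> RtoC 0) by (unfold cL; apply Cdiv_nz; apply Cmult_neq_0; auto).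
    apply HcL. rewrite <- Hcc. ring. }
  rewrite (cs_ext _ (fun k => cL * (RtoC ((-1)^k * binR n k) * tr t' k * RtoC (H2 k)))%C).
  2:{ intros k Hk. rewrite Cdiv_assoc, termL by auto. fold W. fold cL.
      unfold tr, t'. rewrite CV.
      2:{ intros j. apply Rez_nz. auto. }
      replace (W - (u + 1) / 2)%C with ((v + 1)/2)%C by (unfold W; field).
      rewrite binR_C by lia. rewrite !RtoC_mult, RtoC_inv'. pose proof (pow2_nz k).
      pose proof (Pnz W k HW). field. split; auto. }
  rewrite cs_scal, CORE.
  rewrite (Cdiv_assoc cc), termR by auto. fold W. fold cR.
  rewrite (cs_ext (fun k => RtoC ((H n - H k) / (INR n - INR k))
                 * cbinom (RtoC (INR (2 * k)) + u) ((RtoC (INR (2 * k)) + u) / 2)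
                 * RtoC (/ 2 ^ (2 * k))
                 / cbinom ((RtoC (INR (2 * k)) + u + v) / 2) (v / 2))%C (fun k => (cL / cc) * (RtoC (wnk n k) * t' k))%C).
  2:{ intros k Hk. pose proof (termR u v k Hu Hv) as T. fold W cR in T.
      set (c1 := cbinom (RtoC (INR (2 * k)) + u) ((RtoC (INR (2 * k)) + u) / 2)) in *.
      set (c2 := cbinom ((RtoC (INR (2 * k)) + u + v) / 2) (v / 2)) in *.
      replace (RtoC ((H n - H k) / (INR n - INR k)) * c1 * RtoC (/ 2 ^ (2 * k)) / c2)%C
        with (RtoC ((H n - H k) / (INR n - INR k)) * RtoC (/ 2 ^ (2 * k)) * (c1 / c2))%C by (unfold Cdiv; ring).
      rewrite T. rewrite <- Hcc.
      unfold wnk, t'. rewrite RtoC_inv'. pose proof (pow2_nz k). pose proof (Pnz W k HW).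
      field. repeat split; auto. }
  rewrite cs_scal. unfold t'. rewrite RtoC_inv'. pose proof (pow2_nz n). pose proof (Pnz W n HW).
  rewrite <- Hcc. field. repeat split; auto.
Qed.
End Aux.

Theorem theorem36 (n : nat) :
  rsum (fun k => (-1) ^ k * Binomial.C n k * / 2 ^ (2 * k)
                   * Binomial.C (2 * k) k * H2 k)%R (S n)
  = (Binomial.C (2 * n) n * / 2 ^ (2 * n) * H2 n
     - rsum (fun k => (H n - H k) / (INR n - INR k)
                        * Binomial.C (2 * k) k * / 2 ^ (2 * k))%R n)%R
  /\
  forall u v : C, (-1 < Re u)%R -> (-1 < Re v)%R ->
  csum (fun k =>
          RtoC ((-1) ^ k * Binomial.C n k * / 2 ^ (2 * k))
          * cbinom (RtoC (INR (2 * k)) + v) ((RtoC (INR (2 * k)) + v) / 2)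
          / cbinom ((RtoC (INR (2 * k)) + u + v) / 2) (u / 2)
          * RtoC (H2 k))%C (S n)
  = (cbinom v (v / 2) / cbinom u (u / 2)
       * cbinom (RtoC (INR (2 * n)) + u) ((RtoC (INR (2 * n)) + u) / 2)
       / cbinom ((RtoC (INR (2 * n)) + u + v) / 2) (v / 2)
       * RtoC (/ 2 ^ (2 * n)) * RtoC (H2 n)
     - cbinom v (v / 2) / cbinom u (u / 2)
       * csum (fun k =>
                 RtoC ((H n - H k) / (INR n - INR k))
                 * cbinom (RtoC (INR (2 * k)) + u) ((RtoC (INR (2 * k)) + u) / 2)
                 * RtoC (/ 2 ^ (2 * k))
                 / cbinom ((RtoC (INR (2 * k)) + u + v) / 2) (v / 2))%C n)%C.
Proof.
  split.
  - exact (Aux.part1 n).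
  - intros u v Hu Hv. exact (Aux.part2 n u v Hu Hv).
Qed.
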